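(* Let $\mu>1$ and $\beta>0$. If $\tilde f\in\tilde{\mathcal C}_{1,\beta}(V)$ is such that $\tilde M=\tilde\delta\tilde f$ satisfies $\mathcal N[\tilde M;\tilde{\mathcal C}^\mu_{2,\beta}]<\infty$, then $\tilde M=0$. In other words, $\mathcal Z\tilde{\mathcal C}^\mu_{2,\beta}=\{0\}$.
   Context: Fix a measurable $\hat\phi:(0,\infty)\to\mathbb R$, a separable Banach space $V$ and an interval $[\ell_1,\ell_2]$. $\mathcal L_\beta(V)$ is the space of measurable $g:[0,\infty)\to V$ with $\mathcal N[g;\mathcal L_\beta]=\int_0^\infty|\hat\phi(\xi)|(1+\xi^\beta)\|g(\xi)\|_Vd\xi<\infty$. $\tilde{\mathcal C}_{1,\beta}(V)$ is the space of continuous maps $[\ell_1,\ell_2]\to\mathcal L_\beta(V)$, $\tilde{\mathcal C}_{2,\beta}(V)$ the space of continuous maps from $\{(t,s):\ell_2\ge t\ge s\ge\ell_1\}$ to $\mathcal L_\beta(V)$. $(\tilde\delta\tilde f)_{ts}(\xi)=\tilde f_t(\xi)-e^{-\xi(t-s)}\tilde f_s(\xi)$. $\mathcal N[\tilde M;\tilde{\mathcal C}^\mu_{2,\beta}]=\sup_{s<t}\mathcal N[\tilde M_{ts};\mathcal L_\beta]/|t-s|^\mu$, and $\mathcal Z\tilde{\mathcal C}^\mu_{2,\beta}$ is the set of elements of $\tilde{\mathcal C}_{2,\beta}$ of finite such norm lying in the image of $\tilde\delta$. *)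

(* Defs.v *)
From HB Require Import structures.
From mathcomp Require Import all_boot all_order all_algebra.
From mathcomp Require Import all_classical all_reals all_analysis.
Set Implicit Arguments. Unset Strict Implicit. Unset Printing Implicit Defensive.
Import Order.TTheory GRing.Theory Num.Theory.
Import numFieldNormedType.Exports.
Local Open Scope classical_set_scope.
Local Open Scope ring_scope.

Definition separable (R : realType) (V : normedModType R) : Prop :=
  exists S : set V, countable S /\ closure S = [set: V].

Definition vmeasurable_fun (R : realType) (V : normedModType R)
    (D : set R) (g : R -> V) : Prop :=
  forall O : set V, open O -> measurable (D `&` g @^-1` O).

Definition NL (R : realType) (V : normedModType R) (phi : R -> R) (beta : R)
    (g : R -> V) : \bar R :=
  (\int[@lebesgue_measure R]_(x in `]0%R, +oo[)
     ((`|phi x| * (1 + x `^ beta) * `|g x|)%:E))%E.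

Definition inL (R : realType) (V : normedModType R) (phi : R -> R) (beta : R)
    (g : R -> V) : Prop :=
  vmeasurable_fun `[0%R, +oo[ g /\ (NL phi beta g < +oo)%E.

(* \tilde C_{1,beta}(V): continuous maps [l1,l2] -> L_beta(V) *)
Definition inC1 (R : realType) (V : normedModType R) (phi : R -> R) (beta : R)
    (l1 l2 : R) (f : R -> R -> V) : Prop :=
  (forall t, l1 <= t <= l2 -> inL phi beta (f t)) /\
  (forall t, l1 <= t <= l2 -> forall eps : R, 0 < eps ->
     exists2 delta : R, 0 < delta &
       forall t', l1 <= t' <= l2 -> `|t' - t| < delta ->
         (NL phi beta (fun xi => (f t' xi - f t xi)%R) < eps%:E)%E).

Definition tdelta (R : realType) (V : normedModType R) (f : R -> R -> V)
    (t s : R) : R -> V :=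
  fun xi => f t xi - expR (- (xi * (t - s))) *: f s xi.

Definition holder2_finite (R : realType) (V : normedModType R) (phi : R -> R)
    (beta mu l1 l2 : R) (M : R -> R -> R -> V) : Prop :=
  exists C : R, forall s t, l1 <= s -> s < t -> t <= l2 ->
    (NL phi beta (M t s) <= (C * (t - s) `^ mu)%:E)%E.

(* Main.v *)
Require Import Defs.
From HB Require Import structures.
From mathcomp Require Import all_boot all_order all_algebra.
From mathcomp Require Import all_classical all_reals all_analysis.
From mathcomp Require Import measurable_realfun ring lra.
Import Order.TTheory GRing.Theory Num.Theory.
Import numFieldNormedType.Exports.
Local Open Scope classical_set_scope.
Local Open Scope ring_scope.

Section S.
Variables (R : realType) (V : normedModType R).

Lemma dense_seq : separable V -> exists e : nat -> V,
  forall v (eps : R), 0 < eps -> exists n, `|v - e n| < eps.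
Proof.
move=> [S [cS clS]].
have [g sg] : exists g : nat -> V, set_surj setT S g.
  by apply/pcard_surjP.
exists g => v eps eps0.
have : closure S v by rewrite clS.
move=> /(_ (ball v eps) (nbhsx_ballx _ _ eps0)) [w [Sw bw]].
have [n _ gn] := sg w Sw.
by exists n; rewrite gn; move: bw; rewrite -ball_normE.
Qed.

Lemma meas_inf (D : set R) (mD : measurable D) (g : R -> R) (h : nat -> R -> R) :
  (forall n, measurable_fun D (h n)) -> (forall n x, D x -> g x <= h n x) ->
  (forall x, D x -> forall e, 0 < e -> exists n, h n x < g x + e) ->
  measurable_fun D g.
Proof.
move=> mh gh hg; apply: (measurability _ (measurable_realfun.RGenInftyO.measurableE R)) => //.
move=> _ [_ [r ->] <-].
suff -> : D `&` g @^-1` `]-oo, r[ = \bigcup_n (D `&` h n @^-1` `]-oo, r[).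
  by apply: bigcupT_measurable => n; apply: mh => //; exact: measurable_itv.
apply/seteqP; split => x /=.
- move=> [Dx]; rewrite in_itv /= => gr.
  have /(hg x Dx) [n hn] : 0 < r - g x by rewrite subr_gt0.
  exists n => //; split => //; rewrite /= in_itv /=.
  by rewrite addrC subrK in hn.
- move=> [n _ [Dx]]; rewrite /= !in_itv /= => hr; split => //.
  exact: le_lt_trans (gh n x Dx) hr.
Qed.

Lemma meas_normB (D : set R) (mD : measurable D) (a : R -> V) (v : V) : vmeasurable_fun D a ->
  measurable_fun D (fun x => `|v - a x|).
Proof.
move=> ma; apply: (measurability _ (measurable_realfun.RGenInftyO.measurableE R)) => //.
move=> _ [_ [r ->] <-].
suff -> : D `&` (fun x => `|v - a x|) @^-1` `]-oo, r[ = D `&` a @^-1` (ball v r); first by apply: ma; exact: ball_open.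
apply/seteqP; split => x /= [Dx]; rewrite ?in_itv /= -?ball_normE //=.

Qed.

Lemma cont_F (d e : V) : continuous (fun c : R => `|d - c *: e|).
Proof.
move=> x.
apply: (@continuous_comp _ _ _ (fun c : R => d - c *: e) (@Num.norm _ V)).
  apply: cvgB; first exact: cvg_cst.
  apply: cvgZl. exact: cvg_id.
exact: norm_continuous.
Qed.


Lemma meas_M (D : set R) (mD : measurable D) (a b : R -> V) (c : R -> R) :
  separable V -> vmeasurable_fun D a -> vmeasurable_fun D b -> measurable_fun D c ->
  measurable_fun D (fun x => `|a x - c x *: b x|).
Proof.
move=> /dense_seq [e he] ma mb mc.
have m1 : forall d : V, measurable_fun D (fun x => `|d - c x *: b x|).
  move=> d; apply: (@meas_inf D mD _
     (fun n x => `|d - c x *: e n| + `|c x| * `|e n - b x|)).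
  - move=> n; apply: measurable_funD.
      have H := measurableT_comp (continuous_measurable_fun (cont_F d (e n))) mc.
      exact: H.
    apply: measurable_funM; first by have H := measurableT_comp (@normr_measurable R setT) mc; exact: H.
    exact: meas_normB.
  - move=> n x _.
    have -> : d - c x *: b x = (d - c x *: e n) + c x *: (e n - b x).
      by rewrite scalerBr addrA subrK.
    by apply: le_trans (ler_normD _ _) _; rewrite normrZ.
  - move=> x _ eps eps0.
    have cp : 0 < 2 * (`|c x| + 1) by rewrite mulr_gt0 // ltr_wpDl.
    have [n hn] := he (b x) (eps / (2 * (`|c x| + 1))) (divr_gt0 eps0 cp).
    exists n.
    have t1 : `|d - c x *: e n| <= `|d - c x *: b x| + `|c x| * `|b x - e n|.
      have -> : d - c x *: e n = (d - c x *: b x) + c x *: (b x - e n).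
        by rewrite scalerBr addrA subrK.
      by apply: le_trans (ler_normD _ _) _; rewrite normrZ.
    rewrite (distrC (e n)).
    move: hn; rewrite ltr_pdivlMr // => hn.
    have h0 : 0 <= `|b x - e n| by [].
    have h1 : 0 <= `|c x| by [].
    set K := `|c x| * `|b x - e n|.
    have : K * 2 < eps by rewrite /K; nra.
    lra.
apply: (@meas_inf D mD _ (fun n x => `|e n - a x| + `|e n - c x *: b x|)).
- by move=> n; apply: measurable_funD; [exact: meas_normB | exact: m1].
- move=> n x _.
  have -> : a x - c x *: b x = (a x - e n) + (e n - c x *: b x) by rewrite addrA subrK.
  by apply: le_trans (ler_normD _ _) _; rewrite distrC.
- move=> x _ eps eps0.
  have [n hn] := he (a x) (eps / 2) (divr_gt0 eps0 (ltr0Sn _ 1)).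
  exists n.
  have t1 : `|e n - c x *: b x| <= `|e n - a x| + `|a x - c x *: b x|.
    have -> : e n - c x *: b x = (e n - a x) + (a x - c x *: b x) by rewrite addrA subrK.
    exact: ler_normD.
  rewrite (distrC (e n) (a x)) in t1 *.
  lra.
Qed.

Lemma vmeas_sub (a : R -> V) : vmeasurable_fun `[0%R, +oo[ a ->
  vmeasurable_fun `]0%R, +oo[ a.
Proof.
move=> ma O oO.
have -> : `]0%R, +oo[ `&` a @^-1` O = `]0%R, +oo[ `&` (`[0%R, +oo[ `&` a @^-1` O).
  apply/seteqP; split => x /=.
    move=> [h1 h2]; split => //; split => //; move: h1; rewrite !in_itv /= !andbT.
    exact: ltW.
  by move=> [h1 [_ h2]].
by apply: measurableI; [exact: measurable_itv | exact: ma].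
Qed.

Lemma meas_integrand (phi : R -> R) (beta : R) (f : R -> R -> V) t s :
  measurable_fun (`]0%R, +oo[ : set R) phi -> separable V ->
  inL phi beta (f t) -> inL phi beta (f s) ->
  measurable_fun (`]0%R, +oo[ : set R)
    (fun x => ((`|phi x| * (1 + x `^ beta) * `|tdelta f t s x|)%:E)%E).
Proof.
move=> mphi sV [mt _] [ms _].
apply/measurable_EFinP.
apply: measurable_funM; first apply: measurable_funM.
- by have H := measurableT_comp (@normr_measurable R setT) mphi; exact: H.
- apply: measurable_funD; first exact: measurable_cst.
  by apply: measurable_funTS; exact: measurable_powR.
- have mc : measurable_fun (`]0%R, +oo[ : set R) (fun x : R => expR (- (x * (t - s)))).
    have H := measurableT_comp (@measurable_expR R)
     (measurableT_comp (@oppr_measurable R setT) (@mulrr_measurable R `]0%R, +oo[ (t - s))).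
    exact: H.
  have H := @meas_M `]0%R, +oo[ (measurable_itv _) (f t) (f s) _ sV (@vmeas_sub _ mt) (@vmeas_sub _ ms) mc.
  exact: H.
Qed.

Lemma tri_pt (f : R -> R -> V) t s u x : u <= s -> s <= t -> 0 < x ->
  `|tdelta f t u x| <= `|tdelta f t s x| + `|tdelta f s u x|.
Proof.
move=> us st x0.
have eE : expR (- (x * (t - u))) = expR (- (x*(t-s))) * expR (-(x*(s-u))).
  by rewrite -expRD; congr expR; ring.
rewrite /tdelta eE -scalerA.
have -> : f t x - expR (- (x * (t - s))) *: (expR (- (x * (s - u))) *: f u x) =
  (f t x - expR (- (x * (t - s))) *: f s x) +
   expR (- (x * (t - s))) *: (f s x - expR (- (x * (s - u))) *: f u x).
  by rewrite scalerBr addrA subrK.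
apply: le_trans (ler_normD _ _) _; rewrite lerD2l normrZ ger0_norm ?expR_ge0 //.
have E1 : expR (- (x * (t - s))) <= 1.
  by rewrite expR_le1 oppr_le0; apply: mulr_ge0; [exact: ltW | rewrite subr_ge0].
have E0 := expR_ge0 (- (x * (t - s))).
have N0 : 0 <= `|f s x - expR (- (x * (s - u))) *: f u x| by [].
nra.
Qed.

Lemma NL_sub (phi : R -> R) (beta : R) (f : R -> R -> V) t s u :
  measurable_fun (`]0%R, +oo[ : set R) phi -> separable V ->
  inL phi beta (f t) -> inL phi beta (f s) -> inL phi beta (f u) ->
  u <= s -> s <= t ->
  (NL phi beta (tdelta f t u) <= NL phi beta (tdelta f t s) + NL phi beta (tdelta f s u))%E.
Proof.
move=> mphi sV Lt Ls Lu us st.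
have W0 : forall x, (0 <= `|phi x| * (1 + x `^ beta))%R.
  by move=> x; apply: mulr_ge0 => //; apply: addr_ge0 => //; exact: powR_ge0.
have P0 : forall a b x, (0%R <= (`|phi x| * (1 + x `^ beta) * `|tdelta f a b x|)%:E)%E.
  by move=> a b x; rewrite lee_fin; apply: mulr_ge0.
rewrite /NL -ge0_integralD //; last 2 first.
- exact: meas_integrand.
- exact: meas_integrand.
apply: ge0_le_integral => //.
- exact: meas_integrand.
- by apply: emeasurable_funD; exact: meas_integrand.
- move=> x; rewrite /= in_itv /= andbT => x0.
  rewrite -EFinD lee_fin -mulrDr; apply: ler_wpM2l => //.
  exact: tri_pt.
Qed.

Lemma asym (h C mu eps : R) : 0 < h -> 1 < mu -> 0 < eps ->
  exists n : nat, (0 < n)%N /\ n%:R * (C * (h / n%:R) `^ mu) <= eps.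
Proof.
move=> h0 mu1 eps0.
have key : forall n : nat, (0 < n)%N ->
    n%:R * (C * (h / n%:R) `^ mu) = C * h * (h / n%:R) `^ (mu - 1).
  move=> n n0.
  have n0' : (0 < n%:R :> R) by rewrite ltr0n.
  have hn0 : 0 < h / n%:R by rewrite divr_gt0.
  rewrite {1}(_ : mu = 1 + (mu - 1)); last by rewrite addrC subrK.
  rewrite (powRD (r := 1)); last by apply/implyP => _; rewrite gt_eqF.
  rewrite powRr1 ?ltW //.
  set P := _ `^ (mu - 1).
  by field; rewrite gt_eqF.
have [C0|C0] := leP C 0.
  exists 1%N; split => //; rewrite key //.
  have : 0 <= h * (h / 1%:R) `^ (mu - 1) by rewrite mulr_ge0 ?powR_ge0 ?ltW.
  move=> H; rewrite -mulrA; apply: le_trans (ltW eps0).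
  by rewrite mulr_le0_ge0.
set T := eps / (C * h).
have T0 : 0 < T by rewrite divr_gt0 // mulr_gt0.
set del := (T / 2) `^ ((mu - 1)^-1).
have del0 : 0 < del by rewrite powR_gt0 // divr_gt0.
have delE : del `^ (mu - 1) = T / 2.
  rewrite /del -powRrM mulVf ?powRr1 //; first by rewrite ltW // divr_gt0.
  by rewrite subr_eq0 gt_eqF.
have hd0 : 0 <= h / del by rewrite divr_ge0 // ltW.
exists (Num.bound (h / del)).+1; split => //.
rewrite key //.
set n := (Num.bound (h / del)).+1.
have hb := archi_boundP hd0.
have hn : h / n%:R <= del.
  rewrite ler_pdivrMr ?ltr0n // mulrC -ler_pdivrMr //.
  apply: le_trans (ltW hb) _; rewrite ler_nat /n; exact: leqnSn.
have : (h / n%:R) `^ (mu - 1) <= T / 2.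
  rewrite -delE; apply: ge0_ler_powR => //.
  - by rewrite subr_ge0 ltW.
  - by rewrite nnegrE divr_ge0 // ltW.
  - by rewrite nnegrE ltW.
move=> H.
have Ch0 : 0 < C * h by rewrite mulr_gt0.
apply: le_trans (ler_wpM2l (ltW Ch0) H) _.
rewrite /T mulrA mulrCA divff ?gt_eqF // mulr1.
lra.
Qed.

Lemma NL_ge0 (phi : R -> R) (beta : R) (g : R -> V) : (0 <= NL phi beta g)%E.
Proof.
apply: integral_ge0 => x _; rewrite lee_fin; apply: mulr_ge0 => //.
by apply: mulr_ge0 => //; apply: addr_ge0 => //; exact: powR_ge0.
Qed.

Lemma NL_refl (phi : R -> R) (beta : R) (f : R -> R -> V) t :
  NL phi beta (tdelta f t t) = 0%E.
Proof.
rewrite /NL.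
have -> : (fun x => (`|phi x| * (1 + x `^ beta) * `|tdelta f t t x|)%:E) = cst 0%E.
  by apply/funext => x; rewrite /tdelta subrr mulr0 oppr0 expR0 scale1r subrr normr0 mulr0.
exact: integral0.
Qed.

Lemma mono_p (p : nat -> R) n : (forall k, (k < n)%N -> p k <= p k.+1) ->
  forall k, (k <= n)%N -> p 0%N <= p k.
Proof.
move=> hp; elim => // k IH kn.
apply: le_trans (IH (ltnW kn)) (hp k kn).
Qed.

Lemma NL_chain (phi : R -> R) (beta : R) (f : R -> R -> V) (l1 l2 : R) :
  measurable_fun (`]0%R, +oo[ : set R) phi -> separable V ->
  (forall t, l1 <= t <= l2 -> inL phi beta (f t)) ->
  forall n (p : nat -> R), (forall k, (k <= n)%N -> l1 <= p k <= l2) ->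
  (forall k, (k < n)%N -> p k <= p k.+1) ->
  (NL phi beta (tdelta f (p n) (p 0%N)) <=
     \sum_(k < n) NL phi beta (tdelta f (p k.+1) (p k)))%E.
Proof.
move=> mphi sV L; elim => [|n IH] p pin pmon.
  by rewrite NL_refl big_ord0.
rewrite big_ord_recr /=.
apply: le_trans (@NL_sub phi beta f (p n.+1) (p n) (p 0%N) mphi sV _ _ _ _ _) _.
- exact/L/pin.
- exact/L/pin.
- exact/L/pin.
- by apply: (@mono_p p n.+1 pmon n); exact: leqnSn.
- exact: pmon.
rewrite addeC; apply: leeD => //.
apply: IH => k kn; [apply: pin; exact: (leq_trans kn) | apply: pmon; exact: (leq_trans kn)].
Qed.
End S.

Theorem lemma3p4 (R : realType) (V : completeNormedModType R)
  (phi : R -> R) (l1 l2 mu beta : R) (f : R -> R -> V) :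
  measurable_fun (`]0%R, +oo[ : set R) phi ->
  separable V ->
  1 < mu -> 0 < beta ->
  inC1 phi beta l1 l2 f ->
  holder2_finite phi beta mu l1 l2 (tdelta f) ->
  forall s t, l1 <= s -> s <= t -> t <= l2 ->
    NL phi beta (tdelta f t s) = 0%E.
Proof.
move=> mphi sV mu1 b0 [L _] [C HC] s t ls st tl.
have [<-|neq] := eqVneq s t; first exact: NL_refl.
have st' : s < t by rewrite lt_neqAle neq st.
apply/eqP; rewrite eq_le NL_ge0 andbT.
apply/lee_addgt0Pr => eps eps0; rewrite add0e.
have h0 : 0 < t - s by rewrite subr_gt0.
have [n [n0 Hn]] := @asym R (t - s) C mu eps h0 mu1 eps0.
pose p k := s + k%:R * ((t - s) / n%:R).
have n0' : (0 < n%:R :> R) by rewrite ltr0n.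
have q0 : 0 < (t - s) / n%:R by rewrite divr_gt0.
have p0 : p 0%N = s by rewrite /p mul0r addr0.
have pn : p n = t by rewrite /p mulrC divfK ?gt_eqF // addrC subrK.
have pstep k : p k.+1 - p k = (t - s) / n%:R.
  by rewrite /p -addn1 natrD; ring.
have pin k : (k <= n)%N -> l1 <= p k <= l2.
  move=> kn; have : k%:R * ((t - s) / n%:R) <= n%:R * ((t - s) / n%:R).
    by apply: ler_wpM2r; [exact: ltW | rewrite ler_nat].
  have -> : n%:R * ((t - s) / n%:R) = t - s by rewrite mulrC divfK ?gt_eqF.
  move=> H1.
  have H2 : 0 <= k%:R * ((t - s) / n%:R) by apply: mulr_ge0 => //; exact: ltW.
  rewrite /p; apply/andP; split; lra.
have pmon k : (k < n)%N -> p k <= p k.+1.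
  by move=> _; have := pstep k; lra.
rewrite -pn -p0.
apply: le_trans (@NL_chain R V phi beta f l1 l2 mphi sV L n p pin pmon) _.
apply: (@le_trans _ _ (\sum_(k < n) (C * ((t - s) / n%:R) `^ mu)%:E)%E).
  apply: lee_sum => k _.
  rewrite -(pstep k); apply: HC.
  - by have /andP[] := pin k (ltnW (ltn_ord k)).
  - by have := pstep k; lra.
  - by have /andP[] := pin k.+1 (ltn_ord k).
rewrite sumEFin sumr_const card_ord lee_fin.
by rewrite mulr_natl in Hn.
Qed.
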